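(* Let $n\ge3$. In $\mathrm{YTL}_{d,n}(u)$ we have (1) $(t_i-t_j)(t_i-t_k)(t_j-t_k)=0$ for all $1\le i,j,k\le n$; and (2) $(t_j-t_i)(t_j-t_{i+1})(g_i+1)=0$ for all $1\le i\le n-1$ and $1\le j\le n$.
   Context: Let $d,n\ge1$ be integers and $u$ an indeterminate. The Yokonuma–Hecke algebra $\mathrm{Y}_{d,n}(u)$ is the associative $\mathbb{C}[u,u^{-1}]$-algebra generated by $g_1,\dots,g_{n-1},t_1,\dots,t_n$ subject to: $g_ig_j=g_jg_i$ for $|i-j|>1$; $g_ig_{i+1}g_i=g_{i+1}g_ig_{i+1}$ for $1\le i\le n-2$; $t_it_j=t_jt_i$ for all $i,j$; $t_jg_i=g_it_{s_i(j)}$ for all $i,j$, where $s_i$ is the transposition $(i,i+1)$; $t_j^d=1$ for all $j$; and $g_i^2=1+(u-1)e_i+(u-1)e_ig_i$, where $e_i=\frac1d\sum_{s=0}^{d-1}t_i^st_{i+1}^{-s}$. For $n\ge3$, the Yokonuma–Temperley–Lieb algebra $\mathrm{YTL}_{d,n}(u)$ is the quotient of $\mathrm{Y}_{d,n}(u)$ by the two-sided ideal generated by the elements $g_ig_{i+1}g_i+g_ig_{i+1}+g_{i+1}g_i+g_i+g_{i+1}+1$, $1\le i\le n-2$; images of the generators in the quotient are denoted by the same letters. *)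

(* Defs.v *)
From HB Require Import structures.
From mathcomp Require Import all_boot all_order all_algebra.
Set Implicit Arguments. Unset Strict Implicit. Unset Printing Implicit Defensive.
Import Order.TTheory GRing.Theory Num.Theory.
Local Open Scope ring_scope.

Definition swp (i j : nat) : nat :=
  if j == i then i.+1 else if j == i.+1 then i else j.

Definition ytl_e (F : fieldType) (A : unitAlgType F) (d : nat)
  (t : nat -> A) (i : nat) : A :=
  (d%:R^-1 : F) *: \sum_(s < d) (t i ^+ s * t i.+1 ^- s).

(* The elements g_1..g_{n-1}, t_1..t_n of A (indices outside these
   ranges are ignored) satisfy the defining relations of Y_{d,n}(u)
   together with the extra YTL relations, u being a central unit of A. *)
Definition YTL_rels (F : fieldType) (A : unitAlgType F) (d n : nat)
  (u : A) (g t : nat -> A) : Prop :=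
  (u \is a GRing.unit /\ (forall x : A, u * x = x * u)) /\
      (forall i j, (1 <= i <= n.-1)%N -> (1 <= j <= n.-1)%N -> ((i.+1 < j) || (j.+1 < i))%N ->
          g i * g j = g j * g i) /\
      (forall i, (1 <= i <= n - 2)%N -> g i * g i.+1 * g i = g i.+1 * g i * g i.+1) /\
      (forall i j, (1 <= i <= n)%N -> (1 <= j <= n)%N -> t i * t j = t j * t i) /\
      (forall i j, (1 <= i <= n.-1)%N -> (1 <= j <= n)%N -> t j * g i = g i * t (swp i j)) /\
      (forall j, (1 <= j <= n)%N -> t j ^+ d = 1) /\
      (forall i, (1 <= i <= n.-1)%N -> g i ^+ 2 =
          1 + (u - 1) * ytl_e d t i + (u - 1) * ytl_e d t i * g i) /\
      (forall i, (1 <= i <= n - 2)%N ->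
          g i * g i.+1 * g i + g i * g i.+1 + g i.+1 * g i + g i + g i.+1 + 1 = 0).

(* Main.v *)
Require Import Defs.
From HB Require Import structures.
From mathcomp Require Import all_boot all_order all_algebra.
From mathcomp Require Import zify.
Import Order.TTheory GRing.Theory Num.Theory.
Local Open Scope ring_scope.
Set Implicit Arguments. Unset Strict Implicit.

Lemma twB (R : pzRingType) (g x x' y y' : R) :
  x*g = g*x' -> y*g = g*y' -> (x - y)*g = g*(x' - y').
Proof. by rewrite mulrBl mulrBr => -> ->. Qed.
Lemma twM (R : pzRingType) (g x x' y y' : R) :
  x*g = g*x' -> y*g = g*y' -> (x * y)*g = g*(x' * y').
Proof. by move=> hx hy; rewrite -mulrA hy mulrA hx mulrA. Qed.
Lemma twW (R : pzRingType) (Y Y' Y'' g h : R) :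
  Y*g = g*Y' -> Y'*h = h*Y'' -> Y*(g*h) = (g*h)*Y''.
Proof. by move=> h1 h2; rewrite mulrA h1 -mulrA h2 mulrA. Qed.

Definition op (R : pzRingType) (Y Z p : R) := Y * p - p * Z.
Arguments op {R}.
Lemma opD (R : pzRingType) (Y Z p q : R) : op Y Z (p+q) = op Y Z p + op Y Z q.
Proof. by rewrite /op mulrDr mulrDl opprD addrACA. Qed.
Lemma opw (R : pzRingType) (Y Y' Z w : R) : Y*w = w*Y' -> op Y Z w = w*(Y'-Z).
Proof. by move=> h; rewrite /op h mulrBr. Qed.
Lemma op1 (R : pzRingType) (Y Z : R) : op Y Z 1 = Y - Z.
Proof. by rewrite /op mulr1 mul1r. Qed.
Lemma opwC (R : pzRingType) (Y Y' Z w C : R) : Y*w = w*Y' -> op Y Z (w*C) = w*(Y'*C-C*Z).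
Proof. by move=> h; rewrite /op mulrA h -!mulrA -mulrBr. Qed.
Lemma opC (R : pzRingType) (Y Z C : R) : op Y Z C = Y*C-C*Z.
Proof. by []. Qed.
Lemma op0 (R : pzRingType) (Y Z p : R) : p = 0 -> op Y Z p = 0.
Proof. by move=> ->; rewrite /op mulr0 mul0r subrr. Qed.
Lemma comm0 (R : pzRingType) (x y : R) : GRing.comm x y -> x*y - y*x = 0.
Proof. by move=> ->; rewrite subrr. Qed.

Lemma round12 (R : pzRingType) (a b c g1 g2 : R) :
  a*g1 = g1*b -> b*g1 = g1*a -> c*g1 = g1*c ->
  a*g2 = g2*a -> b*g2 = g2*c -> c*g2 = g2*b ->
  GRing.comm a b -> GRing.comm a c -> GRing.comm b c ->
  g1*g2*g1 + g1*g2 + g2*g1 + g1 + g2 + 1 = 0 ->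
  g2*((a-b)*(a-c)) + (a-b)*(a-c) = 0.
Proof.
move=> a1 b1 c1 a2 b2 c2 ab ac bc HS.
have h1 := op0 a b HS.
have w1 : a*(g1*g2) = (g1*g2)*c := twW a1 b2.
have w2 : a*(g2*g1) = (g2*g1)*b := twW a2 a1.
have w3 : a*(g1*g2*g1) = (g1*g2*g1)*c := twW w1 c1.
rewrite !opD op1 (opw _ w3) (opw _ w1) (opw _ w2) (opw _ a1) (opw _ a2) subrr !mulr0 !addr0 in h1.
have h2 := op0 a c h1.
rewrite (opD _ _ (_ + _ + _)) (opD _ _ (_ + _)) (opD _ _ (g1 * g2 * g1 * _)) (opwC _ _ w3) (opwC _ _ w1) (opwC _ _ a2) opC in h2.
have e1 : c * (c - b) - (c - b) * c = 0.
  by apply: comm0; apply: commrB; [exact: commr_refl | exact: commr_sym].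
have e2 : a * (a - b) - (a - b) * c = (a-b)*(a-c).
  by rewrite (commrB (commr_refl a) ab) mulrBr.
by rewrite e1 e2 !mulr0 !add0r in h2.
Qed.

Lemma adj_tri (R : pzRingType) (a b c g1 g2 : R) :
  a*g1 = g1*b -> b*g1 = g1*a -> c*g1 = g1*c ->
  a*g2 = g2*a -> b*g2 = g2*c -> c*g2 = g2*b ->
  GRing.comm a b -> GRing.comm a c -> GRing.comm b c ->
  g1*g2*g1 + g1*g2 + g2*g1 + g1 + g2 + 1 = 0 ->
  (a-b)*(a-c)*(b-c) = 0.
Proof.
move=> a1 b1 c1 a2 b2 c2 ab ac bc HS.
have h := round12 a1 b1 c1 a2 b2 c2 ab ac bc HS.
have h3 := op0 b c h.
rewrite opD (opwC _ _ b2) opC in h3.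
have cK : GRing.comm c ((a-b)*(a-c)).
  apply: commrM; apply: commrB; try exact: commr_sym; exact: commr_refl.
rewrite (comm0 cK) mulr0 add0r -cK -mulrBl in h3.
have bcK : GRing.comm (b-c) ((a-b)*(a-c)).
  apply: commrM; apply: commrB; apply: commr_sym; apply: commrB;
   try exact: commr_sym; try exact: commr_refl; done.
by rewrite -bcK.
Qed.

Lemma adj_low (R : pzRingType) (a b c g1 g2 : R) :
  a*g1 = g1*b -> b*g1 = g1*a -> c*g1 = g1*c ->
  a*g2 = g2*a -> b*g2 = g2*c -> c*g2 = g2*b ->
  GRing.comm a b -> GRing.comm a c -> GRing.comm b c ->
  g1*g2*g1 + g1*g2 + g2*g1 + g1 + g2 + 1 = 0 ->
  (a-b)*(a-c)*(g2+1) = 0.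
Proof.
move=> a1 b1 c1 a2 b2 c2 ab ac bc HS.
have h := round12 a1 b1 c1 a2 b2 c2 ab ac bc HS.
rewrite mulrDr mulr1 (twM (twB a2 b2) (twB a2 c2)).
have -> : (a - c) * (a - b) = (a - b) * (a - c).
  apply: commrB; apply: commr_sym; apply: commrB; try exact: commr_refl; try exact: commr_sym; done.
exact: h.
Qed.

Lemma adj_high (R : pzRingType) (a b c g1 g2 : R) :
  a*g1 = g1*b -> b*g1 = g1*a -> c*g1 = g1*c ->
  a*g2 = g2*a -> b*g2 = g2*c -> c*g2 = g2*b ->
  GRing.comm a b -> GRing.comm a c -> GRing.comm b c ->
  g1*g2*g1 + g1*g2 + g2*g1 + g1 + g2 + 1 = 0 ->
  (c-a)*(c-b)*(g1+1) = 0.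
Proof.
move=> a1 b1 c1 a2 b2 c2 ab ac bc HS.
have h1 := op0 c b HS.
have w1 : c*(g1*g2) = (g1*g2)*b := twW c1 c2.
have w2 : c*(g2*g1) = (g2*g1)*a := twW c2 b1.
have w3 : c*(g1*g2*g1) = (g1*g2*g1)*a := twW w1 b1.
rewrite !opD op1 (opw _ w3) (opw _ w1) (opw _ w2) (opw _ c1) (opw _ c2) subrr !mulr0 !addr0 in h1.
have h2 := op0 c a h1.
rewrite (opD _ _ (_ + _ + _)) (opD _ _ (_ + _)) (opD _ _ (g1 * g2 * g1 * _)) (opwC _ _ w3) (opwC _ _ w2) (opwC _ _ c1) opC in h2.
have e1 : a * (a - b) - (a - b) * a = 0.
  by apply: comm0; apply: commrB; [exact: commr_refl | exact: ab].
have e2 : c * (c - b) - (c - b) * a = (c-b)*(c-a).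
  by rewrite (commrB (commr_refl c) (commr_sym bc)) mulrBr.
rewrite e1 e2 !mulr0 !add0r in h2.
rewrite mulrDr mulr1 (twM (twB c1 a1) (twB c1 b1)).
have -> : (c - a) * (c - b) = (c - b) * (c - a).
  apply: commrB; apply: commr_sym; apply: commrB; try exact: commr_refl; try exact: commr_sym; done.
exact: h2.
Qed.

Lemma unit_pow (R : unitRingType) (x : R) (d : nat) : (0 < d)%N -> x ^+ d = 1 -> x \is a GRing.unit.
Proof.
case: d => // d _ h; apply/unitrP; exists (x ^+ d); split.
  by rewrite -exprSr.
by rewrite -exprS.
Qed.

Lemma e_idem (F : fieldType) (A : unitAlgType F) (d : nat) (t : nat -> A) i :
  d%:R != 0 :> F -> (0 < d)%N -> t i ^+ d = 1 -> t i.+1 ^+ d = 1 ->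
  GRing.comm (t i) (t i.+1) -> ytl_e d t i * ytl_e d t i = ytl_e d t i.
Proof.
move=> dn0 dpos hi hi1 cm.
set x := t i * (t i.+1)^-1.
have cV : GRing.comm (t i) (t i.+1)^-1 by apply: commrV.
have hx : forall s, t i ^+ s * t i.+1 ^- s = x ^+ s.
  by move=> s; rewrite /x exprMn_comm // exprVn.
have ed : ytl_e d t i = (d%:R^-1 : F) *: \sum_(s < d) x ^+ s.
  by rewrite /ytl_e; congr (_ *: _); apply: eq_bigr => s _; rewrite hx.
have xd : x ^+ d = 1 by rewrite -hx hi hi1 invr1 mulr1.
have sx : x * \sum_(s < d) x ^+ s = \sum_(s < d) x ^+ s.
  rewrite mulr_sumr.
  under eq_bigr => s _ do rewrite -exprS.
  move: xd; case: (d) => [|d'] xd; first by rewrite !big_ord0.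
  rewrite big_ord_recr big_ord_recl /= xd expr0 addrC.
  congr (_ + _); apply: eq_bigr => s _; by [].
have xe : forall s, x ^+ s * ytl_e d t i = ytl_e d t i.
  elim=> [|s IH]; first by rewrite mul1r.
  by rewrite exprSr -mulrA ed -scalerAr sx -ed IH.
rewrite {1}ed -scalerAl mulr_suml.
under eq_bigr => s _ do rewrite xe.
rewrite sumr_const card_ord -scaler_nat scalerA mulVf // scale1r //.
Qed.

Lemma canc_g (F : fieldType) (A : unitAlgType F) (u e g : A) :
  u \is a GRing.unit -> (forall x : A, u * x = x * u) -> e * e = e ->
  g ^+ 2 = 1 + (u - 1) * e + (u - 1) * e * g ->
  forall Q, g * Q = 0 -> Q = 0.
Proof.
move=> uu uc ee hq Q gQ.
have h : Q + (u - 1) * (e * Q) = 0.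
  have : g ^+ 2 * Q = 0 by rewrite expr2 -mulrA gQ mulr0.
  have h0 : g ^+ 2 * Q = 0 by rewrite expr2 -mulrA gQ mulr0.
  by move: h0; rewrite hq mulrDl mulrDl mul1r -!mulrA gQ !mulr0 addr0.
have eQ : e * Q = 0.
  have : e * (Q + (u - 1) * (e * Q)) = 0 by rewrite h mulr0.
  rewrite mulrDr mulrA (_ : e * (u - 1) = (u - 1) * e); last first.
    by rewrite mulrBr mulrBl mulr1 mul1r uc.
  rewrite -[(u - 1) * e * (e * Q)]mulrA [e * (e * Q)]mulrA ee -{1}(mul1r (e * Q)) -mulrDl addrC subrK => H.
  by rewrite -(mulKr uu (e * Q)) H mulr0.
by move: h; rewrite eQ mulr0 addr0.
Qed.

Lemma sw0 m : swp m m = m.+1.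
Proof. by rewrite /swp eqxx. Qed.
Lemma sw1 m : swp m m.+1 = m.
Proof. by rewrite /swp (_ : (m.+1 == m) = false) ?eqxx //; apply/eqP; lia. Qed.
Lemma swL m j : (j < m)%N -> swp m j = j.
Proof.
move=> h; rewrite /swp (_ : (j == m) = false); last by apply/eqP; lia.
by rewrite (_ : (j == m.+1) = false) //; apply/eqP; lia.
Qed.
Lemma swR m j : (m.+1 < j)%N -> swp m j = j.
Proof.
move=> h; rewrite /swp (_ : (j == m) = false); last by apply/eqP; lia.
by rewrite (_ : (j == m.+1) = false) //; apply/eqP; lia.
Qed.

Unset Implicit Arguments.

Theorem mainTheorem13 (F : fieldType) (charF0 : [pchar F] =i pred0)
  (d n : nat) (hd : (1 <= d)%N) (hn : (3 <= n)%N)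
  (A : unitAlgType F) (u : A) (g t : nat -> A) :
  YTL_rels d n u g t ->
  (forall i j k : nat, (1 <= i <= n)%N -> (1 <= j <= n)%N -> (1 <= k <= n)%N ->
     (t i - t j) * (t i - t k) * (t j - t k) = 0) /\
  (forall i j : nat, (1 <= i <= n.-1)%N -> (1 <= j <= n)%N ->
     (t j - t i) * (t j - t i.+1) * (g i + 1) = 0).
Proof.
move=> [[hu hc] [hfar [hbraid [htc [htg [htd [hq hS]]]]]]].
have dn0 : d%:R != 0 :> F.
  by move/pcharf0P: charF0 => ->; rewrite -lt0n.
have canc : forall m Q, (1 <= m <= n.-1)%N -> g m * Q = 0 -> Q = 0.
  move=> m Q hm; apply: (canc_g hu hc _ (hq m hm)).
  apply: e_idem => //; first (apply: htd; lia); first (apply: htd; lia).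
  apply: htc; lia.
have cT : forall a b c e, (1 <= a <= n)%N -> (1 <= b <= n)%N -> (1 <= c <= n)%N ->
    (1 <= e <= n)%N -> GRing.comm (t a - t b) (t c - t e).
  move=> a b c e ha hb hc' he.
  apply: commrB; apply: commr_sym; apply: commrB; exact: htc.

pose V := fun i j k => (t i - t j) * (t i - t k) * (t j - t k).
have tV : forall m i j k, (1 <= m <= n.-1)%N -> (1 <= i <= n)%N -> (1 <= j <= n)%N ->
    (1 <= k <= n)%N -> V i j k * g m = g m * V (swp m i) (swp m j) (swp m k).
  move=> m i j k hm hi hj hk; rewrite /V.
  by apply: twM; first apply: twM; apply: twB; apply: htg.
have adj : forall m, (1 <= m)%N -> (m.+2 <= n)%N -> V m m.+1 m.+2 = 0.
  move=> m h1 h2; rewrite /V.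
  have hm : (1 <= m <= n.-1)%N by lia.
  have hm1 : (1 <= m.+1 <= n.-1)%N by lia.
  apply: (adj_tri (g1 := g m) (g2 := g m.+1)).
  - by rewrite htg ?sw0 //; lia.
  - by rewrite htg ?sw1 //; lia.
  - by rewrite htg ?(swR (m := m) (j := m.+2)) //; lia.
  - by rewrite htg ?(swL (m := m.+1) (j := m)) //; lia.
  - by rewrite htg ?sw0 //; lia.
  - by rewrite htg ?sw1 //; lia.
  - by apply: htc; lia.
  - by apply: htc; lia.
  - by apply: htc; lia.
  - by apply: hS; lia.
have stepA : forall p i, (1 <= i)%N -> (i.+2 + p <= n)%N -> V i i.+1 (i.+2 + p)%N = 0.
  elim=> [|p IH] i hi hk; first by rewrite ?addn0; apply: adj; lia.
  have h := tV (i.+2 + p)%N i i.+1 (i.+2 + p)%N.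
  rewrite IH ?mul0r in h; try lia.
  rewrite sw0 (swL (m := i.+2 + p) (j := i)) ?(swL (m := i.+2 + p) (j := i.+1)) in h; try lia.
  apply: (canc (i.+2 + p)%N); first lia.
  rewrite addnS; apply/esym; apply: h; lia.
have stepB : forall p i k, (1 <= i)%N -> (i.+1 + p < k)%N -> (k <= n)%N -> V i (i.+1 + p)%N k = 0.
  elim=> [|p IH] i k hi hk hkn.
    rewrite ?addn0; have -> : k = (i.+2 + (k - i.+2))%N by lia.
    apply: stepA; lia.
  have h := tV (i.+1 + p)%N i (i.+1 + p)%N k.
  rewrite IH ?mul0r in h; try lia.
  rewrite sw0 (swL (m := i.+1 + p) (j := i)) ?(swR (m := i.+1 + p) (j := k)) in h; try lia.
  apply: (canc (i.+1 + p)%N); first lia.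
  rewrite addnS; apply/esym; apply: h; lia.
have sorted : forall i j k, (1 <= i)%N -> (i < j)%N -> (j < k)%N -> (k <= n)%N -> V i j k = 0.
  move=> i j k hi hj hk hkn.
  have -> : j = (i.+1 + (j - i.+1))%N by lia.
  apply: stepB; lia.
have sw12 : forall i j k, (1 <= i <= n)%N -> (1 <= j <= n)%N -> (1 <= k <= n)%N ->
    V i j k = 0 -> V j i k = 0.
  move=> i j k hi hj hk; rewrite /V => h.
  have -> : (t j - t i) * (t j - t k) * (t i - t k) = - ((t i - t j) * (t i - t k) * (t j - t k)).
    rewrite -[t j - t i]opprB mulNr mulNr; congr (- _); rewrite -!mulrA; congr (_ * _).
    exact: cT.
  by rewrite h oppr0.
have sw23 : forall i j k, (1 <= i <= n)%N -> (1 <= j <= n)%N -> (1 <= k <= n)%N ->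
    V i j k = 0 -> V i k j = 0.
  move=> i j k hi hj hk; rewrite /V => h.
  have -> : (t i - t k) * (t i - t j) * (t k - t j) = - ((t i - t j) * (t i - t k) * (t j - t k)).
    rewrite -[t k - t j]opprB mulrN; congr (- _); congr (_ * _).
    exact: cT.
  by rewrite h oppr0.
split.
  move=> i j k hi hj hk.
  have -> : (t i - t j) * (t i - t k) * (t j - t k) = V i j k by [].
  case: (ltngtP i j) => hij; case: (ltngtP j k) => hjk; case: (ltngtP i k) => hik;
    try (by rewrite /V ?hij ?hjk ?hik ?subrr ?mulr0 ?mul0r); try lia.
  1-6: first [ apply: sorted; lia
    | apply: (sw23 i k j) => //; apply: sorted; lia
    | apply: (sw12 j i k) => //; apply: sorted; lia
    | apply: (sw12 j i k) => //; apply: (sw23 j k i) => //; apply: sorted; lia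
    | apply: (sw23 i k j) => //; apply: (sw12 k i j) => //; apply: sorted; lia
    | apply: (sw12 j i k) => //; apply: (sw23 j k i) => //; apply: (sw12 k j i) => //; apply: sorted; lia ].
pose W := fun j i => (t j - t i) * (t j - t i.+1) * (g i + 1).
have tW : forall m j i, (1 <= m <= n.-1)%N -> (1 <= i <= n.-1)%N ->
    (i.+1 < m)%N || (m.+1 < i)%N -> (1 <= j <= n)%N -> W j i * g m = g m * W (swp m j) i.
  move=> m j i hm hi hmi hj.
  have [e1 e2] : swp m i = i /\ swp m i.+1 = i.+1.
    by case/orP: hmi => h; split; [apply: swL|apply: swL|apply: swR|apply: swR]; lia.
  have gg : (g i + 1) * g m = g m * (g i + 1).
    by rewrite mulrDl mulrDr mul1r mulr1 (hfar i m).
  rewrite /W; apply: twM => //; apply: twM; apply: twB; rewrite htg ?e1 ?e2 //; lia.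
move=> i j hi hj.
have -> : (t j - t i) * (t j - t i.+1) * (g i + 1) = W j i by [].
have : (j < i \/ j = i \/ j = i.+1 \/ i.+1 < j)%N by lia.
case => [hlt|[->|[->|hgt]]].
- have down : forall p q, (q + p)%N = i.-1 -> (1 <= q)%N -> W q i = 0.
    elim=> [|p IH] q hqp hq1.
      have -> : i = q.+1 by lia.
      have hm : (1 <= q <= n.-1)%N by lia.
      have hm1 : (1 <= q.+1 <= n.-1)%N by lia.
      rewrite /W; apply: (adj_low (g1 := g q) (g2 := g q.+1)).
      + by rewrite htg ?sw0 //; lia.
      + by rewrite htg ?sw1 //; lia.
      + by rewrite htg ?(swR (m := q) (j := q.+2)) //; lia.
      + by rewrite htg ?(swL (m := q.+1) (j := q)) //; lia.
      + by rewrite htg ?sw0 //; lia.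
      + by rewrite htg ?sw1 //; lia.
      + by apply: htc; lia.
      + by apply: htc; lia.
      + by apply: htc; lia.
      + by apply: hS; lia.
    have h := tW q q.+1 i ltac:(lia) ltac:(lia) ltac:(apply/orP; right; lia) ltac:(lia).
    rewrite IH ?mul0r ?sw1 in h; try lia.
    apply: (canc q); first lia.
    by apply/esym.
  by apply: (down (i.-1 - j)%N); lia.
- by rewrite /W subrr !mul0r.
- by rewrite /W subrr mulr0 mul0r.
- have up : forall p, (i.+2 + p <= n)%N -> W (i.+2 + p)%N i = 0.
    elim=> [|p IH] hp.
      have hm : (1 <= i <= n.-1)%N by lia.
      have hm1 : (1 <= i.+1 <= n.-1)%N by lia.
      rewrite ?addn0 /W; apply: (adj_high (g1 := g i) (g2 := g i.+1)).
      + by rewrite htg ?sw0 //; lia.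
      + by rewrite htg ?sw1 //; lia.
      + by rewrite htg ?(swR (m := i) (j := i.+2)) //; lia.
      + by rewrite htg ?(swL (m := i.+1) (j := i)) //; lia.
      + by rewrite htg ?sw0 //; lia.
      + by rewrite htg ?sw1 //; lia.
      + by apply: htc; lia.
      + by apply: htc; lia.
      + by apply: htc; lia.
      + by apply: hS; lia.
    have h := tW (i.+2 + p)%N (i.+2 + p)%N i ltac:(lia) ltac:(lia) ltac:(apply/orP; left; lia) ltac:(lia).
    rewrite IH ?mul0r ?sw0 in h; try lia.
    apply: (canc (i.+2 + p)%N); first lia.
    by rewrite addnS; apply/esym.
  have -> : j = (i.+2 + (j - i.+2))%N by lia.
  apply: up; lia.
Qed.
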